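(* Let $r\in\mathbb{R}\setminus\{0\}$ and let $F$ be a distribution function on $\mathbb{R}$ with a density $f$ that is $(-r+1)$-decreasing with threshold $t^*(-r+1)$. If $r<0$, then $z\mapsto F(z^{1/r})$ is concave on $(0,(t^*(-r+1))^r)$; if $r>0$, then $z\mapsto F(z^{1/r})$ is concave on $((t^*(-r+1))^r,+\infty)$. In particular, $F$ is $r$-revealed-concave with threshold $t^{**}(r)=(t^*(-r+1))^r$.
   Context: A function $f:\mathbb{R}\to\mathbb{R}$ is $\alpha$-decreasing ($\alpha\in\mathbb{R}$) with threshold $t^*(\alpha)>0$ if $f$ is continuous on $(0,\infty)$ and $t\mapsto t^\alpha f(t)$ is strictly decreasing for all $t>t^*(\alpha)$. A function $F$ is $r$-revealed-concave with threshold $t^{**}(r)>0$ if: for $r<0$, $t\mapsto F(t^{1/r})$ is concave on $(0,t^{**}(r)]$; for $r=0$, $t\mapsto F(e^t)$ is concave on $[t^{**}(r),\infty)$; for $r>0$, $t\mapsto F(t^{1/r})$ is concave on $[t^{**}(r),\infty)$. *)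

(* Defs.v *)
From HB Require Import structures.
From mathcomp Require Import all_boot all_order all_algebra.
From mathcomp Require Import all_classical all_reals all_analysis.
Set Implicit Arguments. Unset Strict Implicit. Unset Printing Implicit Defensive.
Import Order.TTheory GRing.Theory Num.Theory.
Import numFieldNormedType.Exports.
Local Open Scope classical_set_scope.
Local Open Scope ring_scope.

Definition distribution_function (R : realType) (F : R -> R) : Prop :=
  {homo F : x y / x <= y} /\
  (F x @[x --> -oo] --> (0 : R)) /\
  (F x @[x --> +oo] --> (1 : R)) /\
  (forall x, F t @[t --> x^'+] --> F x).

Definition has_density (R : realType) (F f : R -> R) : Prop :=
  measurable_fun setT f /\ (forall x, 0 <= f x) /\
  (forall x, ((F x)%:E = \int[lebesgue_measure]_(t in `]-oo, x]) (f t)%:E)%E).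

Definition alpha_decreasing (R : realType) (alpha tstar : R) (f : R -> R) : Prop :=
  0 < tstar /\
  (forall x, 0 < x -> {for x, continuous f}) /\
  (forall s t, tstar < s -> s < t -> t `^ alpha * f t < s `^ alpha * f s).

Definition concave_on (R : realType) (A : set R) (g : R -> R) : Prop :=
  forall x y, A x -> A y -> forall l, 0 <= l <= 1 ->
    (1 - l) * g x + l * g y <= g ((1 - l) * x + l * y).

Definition revealed_concave (R : realType) (r tss : R) (F : R -> R) : Prop :=
  0 < tss /\
  (r < 0 -> concave_on [set z | 0 < z <= tss] (fun z => F (z `^ r^-1))) /\
  (r = 0 -> concave_on [set z | tss <= z] (fun z => F (expR z))) /\
  (0 < r -> concave_on [set z | tss <= z] (fun z => F (z `^ r^-1))).

(* Main.v *)
Require Import Defs.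
From HB Require Import structures.
From mathcomp Require Import all_boot all_order all_algebra.
From mathcomp Require Import all_classical all_reals all_analysis.
Import Order.TTheory GRing.Theory Num.Theory.
Import numFieldNormedType.Exports.
From mathcomp Require Import ring lra.
Local Open Scope classical_set_scope.
Local Open Scope ring_scope.

Lemma is_derive_comp1 (R : realType) (g k : R -> R) (x dg dk : R) :
  is_derive x 1 k dk -> is_derive (k x) 1 g dg -> is_derive x 1 (g \o k) (dg * dk).
Proof.
move=> hk hg.
have dk' : derivable k x 1 by case: hk.
have dg' : derivable g (k x) 1 by case: hg.
split.
  apply/derivable1_diffP; apply: differentiable_comp; exact/derivable1_diffP.
rewrite -derive1E derive1_comp // !derive1E.
by rewrite !derive_val.
Qed.

Lemma concave_gen (R : realType) (A : set R) (h d : R -> R) :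
  (forall x y c, A x -> A y -> x <= c <= y -> {for c, continuous h}) ->
  (forall x y c, A x -> A y -> x < c < y -> is_derive c 1 h (d c)) ->
  (forall x y c1 c2, A x -> A y -> x < c1 -> c1 < c2 -> c2 < y -> d c2 <= d c1) ->
  concave_on A h.
Proof.
move=> H1 H2 H3.
suff key : forall x y, A x -> A y -> x < y -> forall l, 0 < l < 1 ->
    (1 - l) * h x + l * h y <= h ((1 - l) * x + l * y).
  move=> x y Ax Ay l /andP[l0 l1].
  have [->|l0'] := eqVneq l 0.
    by rewrite subr0 mul1r !mul0r !addr0 mul1r.
  have [->|l1'] := eqVneq l 1.
    by rewrite subrr !mul0r !add0r !mul1r.
  have hl : 0 < l < 1 by rewrite !lt_def l0 l1 l0' eq_sym l1'.
  case: (ltgtP x y) => [xy|yx|<-].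
  - exact: key.
  - have hl' : 0 < 1 - l < 1.
      by move: hl => /andP[a b]; apply/andP; split; lra.
    have := key y x Ay Ax yx (1 - l) hl'.
    have -> : 1 - (1 - l) = l by ring.
    by rewrite addrC [(1 - l) * x + _]addrC.
  - by rewrite -mulrDl subrK mul1r -mulrDl subrK mul1r.
move=> x y Ax Ay xy l /andP[l0 l1].
set m := (1 - l) * x + l * y.
have xm : x < m by rewrite /m; nra.
have my : m < y by rewrite /m; nra.
have cont : forall a b, x <= a -> b <= y -> {within `[a, b], continuous h}.
  move=> a b xa yb; apply: continuous_in_subspaceT => c.
  rewrite inE /= in_itv /= => /andP[ac cb].
  apply: (H1 x y c Ax Ay); apply/andP; split; [exact: le_trans ac|exact: le_trans yb].
have D1 : forall c, c \in `]x, m[ -> is_derive c 1 h (d c).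
  move=> c; rewrite in_itv /= => /andP[a b]; apply: (H2 x y c Ax Ay).
  by apply/andP; split=> //; apply: lt_trans my.
have D2 : forall c, c \in `]m, y[ -> is_derive c 1 h (d c).
  move=> c; rewrite in_itv /= => /andP[a b]; apply: (H2 x y c Ax Ay).
  by apply/andP; split=> //; apply: lt_trans a.
have [c1 c1in e1] := MVT xm D1 (cont x m (lexx _) (ltW my)).
have [c2 c2in e2] := MVT my D2 (cont m y (ltW xm) (lexx _)).
move: c1in c2in; rewrite !in_itv /= => /andP[xc1 c1m] /andP[mc2 c2y].
have dd := H3 x y c1 c2 Ax Ay xc1 (lt_trans c1m mc2) c2y.
have P0 : 0 <= l * (1 - l) * (y - x).
  by apply: mulr_ge0; [apply: mulr_ge0|]; lra.
have Q : 0 <= l * (1 - l) * (y - x) * (d c1 - d c2) by apply: mulr_ge0 => //; lra.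
have hm : h m = h x + d c1 * (m - x) by lra.
have hy : h y = h m + d c2 * (y - m) by lra.
rewrite hy hm /m; nra.
Qed.


Lemma F_deriv (R : realType) (F f : R -> R) :
  has_density F f -> (forall x, 0 < x -> {for x, continuous f}) ->
  forall x : R, 0 < x -> is_derive x 1 F (f x).
Proof.
move=> [mf [f0 Fint]] cf x x0.
have xu : x < x + 1 by lra.
have intf : (@lebesgue_measure R).-integrable
    [set` Interval (BInfty _ true) (BRight (x + 1))] (EFin \o f).
  apply/integrableP; split.
    apply/measurable_realfun.measurable_EFinP; exact: measurable_funS mf.
  set D := [set` Interval (BInfty _ true) (BRight (x + 1))].
  have -> : (\int[lebesgue_measure]_(t in D) `|(EFin \o f) t|)%E = (\int[lebesgue_measure]_(t in D) (f t)%:E)%E.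
    apply: eq_integral => t _ /=. by rewrite ger0_norm.
  by rewrite /D -Fint ltry.
have [d1 d2] := @continuous_FTC1 R f (BInfty _ true) x (x + 1) xu intf
  (ltNyr _) (cf x x0).
have FE : F = (fun y : R => \int[lebesgue_measure]_(t in [set` Interval (BInfty _ true) (BRight y)]) (f t))%R.
  by apply/funext => y; rewrite /Rintegral -Fint.
rewrite FE; have := derivableP d1; by rewrite -derive1E d2.
Qed.

Lemma powR_lt_neg (R : realType) (a b p : R) :
  0 < a -> a < b -> p < 0 -> b `^ p < a `^ p.
Proof.
move=> a0 ab p0; have b0 : 0 < b by apply: lt_trans ab.
rewrite /powR !gt_eqF // ltr_expR.
have : ln a < ln b by rewrite ltr_ln // posrE.
nra.
Qed.

Lemma conc_F (R : realType) (F f : R -> R) (s : R) (A : set R) :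
  has_density F f -> (forall x : R, 0 < x -> {for x, continuous f}) ->
  (forall x y c, A x -> A y -> x <= c <= y -> 0 < c) ->
  (forall x y c1 c2, A x -> A y -> x < c1 -> c1 < c2 -> c2 < y ->
     f (c2 `^ s) * (s * c2 `^ (s - 1)) <= f (c1 `^ s) * (s * c1 `^ (s - 1))) ->
  concave_on A (fun z => F (z `^ s)).
Proof.
move=> hd cf hpos hmono.
have D : forall c : R, 0 < c ->
    is_derive c 1 (fun z => F (z `^ s)) (f (c `^ s) * (s * c `^ (s - 1))).
  move=> c c0.
  have h1 : is_derive c 1 (fun z : R => z `^ s) (s * c `^ (s - 1)) by apply: is_derive1_powR.
  have h2 : is_derive ((fun z : R => z `^ s) c) 1 F (f (c `^ s)).
    by apply: F_deriv => //; apply: powR_gt0.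
  exact: (@is_derive_comp1 R F (fun z : R => z `^ s) c _ _ h1 h2).
apply: (@concave_gen R A _ (fun c => f (c `^ s) * (s * c `^ (s - 1)))).
- move=> x y c Ax Ay hc.
  have c0 := hpos x y c Ax Ay hc.
  have [d1 _] := D c c0.
  by apply: differentiable_continuous; apply/derivable1_diffP.
- move=> x y c Ax Ay /andP[xc cy]; apply: D.
  by apply: (hpos x y c Ax Ay); rewrite !ltW.
- exact: hmono.
Qed.

Theorem lemma2p8 (R : realType) (r tstar : R) (F f : R -> R) :
  r != 0 ->
  distribution_function F ->
  has_density F f ->
  alpha_decreasing (- r + 1) tstar f ->
  (r < 0 -> concave_on [set z | 0 < z < tstar `^ r] (fun z => F (z `^ r^-1))) /\
  (0 < r -> concave_on [set z | tstar `^ r < z] (fun z => F (z `^ r^-1))) /\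
  revealed_concave r (tstar `^ r) F.
Proof.
move=> r0 _ hd [t0 [cf dec]].
set s := r^-1.
set T := tstar `^ r.
have T0 : 0 < T by apply: powR_gt0.
have Ts : T `^ s = tstar by rewrite /T /s -powRrM mulfV // powRr1 // ltW.
have dE : forall c : R, 0 < c ->
    f (c `^ s) * (s * c `^ (s - 1)) = s * ((c `^ s) `^ (- r + 1) * f (c `^ s)).
  move=> c c0; rewrite -powRrM.
  have -> : s * (- r + 1) = s - 1 by rewrite /s mulrDr mulr1 mulrN mulVf // addrC.
  by rewrite mulrC mulrA.
have Cneg : r < 0 -> forall A : set R,
    (forall z, A z -> 0 < z <= T) ->
    concave_on A (fun z => F (z `^ s)).
  move=> rn A hA.
  have sn : s < 0 by rewrite /s invr_lt0.
  apply: (@conc_F R F f s A hd cf).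
    move=> x y c Ax Ay /andP[xc cy].
    by have /andP[x0 _] := hA x Ax; apply: lt_le_trans xc.
  move=> x y c1 c2 Ax Ay xc1 c12 c2y.
  have /andP[x0 _] := hA x Ax.
  have /andP[_ yT] := hA y Ay.
  have c10 : 0 < c1 by apply: lt_trans xc1.
  have c20 : 0 < c2 by apply: lt_trans c12.
  rewrite !dE //.
  have t2 : tstar < c2 `^ s by rewrite -Ts; apply: powR_lt_neg => //; apply: lt_le_trans yT.
  have t12 : c2 `^ s < c1 `^ s by apply: powR_lt_neg.
  by rewrite ler_nM2l //; apply: ltW; apply: dec.
have Cpos : 0 < r -> forall A : set R,
    (forall z, A z -> T <= z) ->
    concave_on A (fun z => F (z `^ s)).
  move=> rp A hA.
  have sp : 0 < s by rewrite /s invr_gt0.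
  apply: (@conc_F R F f s A hd cf).
    move=> x y c Ax Ay /andP[xc cy].
    by apply: lt_le_trans xc; apply: lt_le_trans (hA x Ax).
  move=> x y c1 c2 Ax Ay xc1 c12 c2y.
  have Tc1 : T < c1 by apply: le_lt_trans (hA x Ax) xc1.
  have c10 : 0 < c1 by apply: lt_trans Tc1.
  have c20 : 0 < c2 by apply: lt_trans c12.
  rewrite !dE //.
  have t1 : tstar < c1 `^ s.
    by rewrite -Ts; apply: gt0_ltr_powR => //; rewrite nnegrE ltW.
  have t12 : c1 `^ s < c2 `^ s.
    by apply: gt0_ltr_powR => //; rewrite nnegrE ltW.
  by rewrite ler_pM2l //; apply: ltW; apply: dec.
split.
  move=> rn; apply: Cneg => // z /andP[z0 zT]; apply/andP; split => //; exact: ltW.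
split.
  by move=> rp; apply: Cpos => // z /= zz; apply: ltW.
rewrite /revealed_concave; split => //.
split.
  by move=> rn; apply: Cneg => // z /= zz.
split.
  by move=> r00; move: r0; rewrite r00 eqxx.
by move=> rp; apply: Cpos => // z /= zz.
Qed.
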